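(* Let $k,r\ge1$ be integers and let $m=\lceil r/2\rceil$. Then $$\psi_{(3,2^k,1^r)}=\begin{cases}\big[\psi_{(2^{m+k+1})}-h_2p_1^{r+1}\psi_{(2^k)}\big]+p_1^r(2h_3+e_3)\psi_{(2^k)}, & r\text{ odd},\\[2pt] p_1\big[\psi_{(2^{m+k+1})}-h_2p_1^{r}\psi_{(2^k)}\big]+p_1^r(2h_3+e_3)\psi_{(2^k)}, & r\text{ even}.\end{cases}$$
   Context: $p_i$, $h_i$, $e_i$ denote power sum, complete homogeneous and elementary symmetric functions, and $p_\lambda=\prod_i p_{\lambda_i}$. Reverse lexicographic order on partitions of $n$: for distinct $\lambda,\mu\vdash n$, $\lambda>\mu$ iff $\lambda_j>\mu_j$ at the first index $j$ where they differ; $(1^n)$ is minimal. For $\mu\vdash n$, $\psi_\mu=\sum_{\lambda\vdash n,\ (1^n)\le\lambda\le\mu}p_\lambda$. In particular $\psi_{(2^j)}=\sum_{i=0}^j p_2^ip_1^{2j-2i}$. *)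

(* Defs.v *)
(* symmetric functions realised in {mpoly R[n]} for every n. *)
From HB Require Import structures.
From mathcomp Require Import all_boot all_order all_algebra.
From mathcomp Require Import mpoly.
Set Implicit Arguments. Unset Strict Implicit. Unset Printing Implicit Defensive.
Import Order.TTheory GRing.Theory.
Local Open Scope ring_scope.

Section SymFun.
Variables (n : nat) (R : comNzRingType).

Definition psum (k : nat) : {mpoly R[n]} := \sum_(i < n) 'X_i ^+ k.

Definition hsym (d : nat) : {mpoly R[n]} :=
  \sum_(m : 'X_{1..n < d.+1} | mdeg (val m) == d) 'X_[val m].

Definition esf (d : nat) : {mpoly R[n]} := mesym n R d.

Definition plam (la : seq nat) : {mpoly R[n]} := \prod_(i <- la) psum i.
End SymFun.

(* parts_aux f N K : all partitions (weakly decreasing sequences of positive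
   integers) of N whose parts are <= K; f is fuel (f >= N suffices). *)
Fixpoint parts_aux (f N K : nat) : seq (seq nat) :=
  if N is 0 then [:: [::]] else
  match f with
  | 0 => [::]
  | f'.+1 => flatten [seq [seq a :: s | s <- parts_aux f' (N - a) a]
                     | a <- iota 1 (minn K N)]
  end.

Definition partitions (N : nat) : seq (seq nat) := parts_aux N N N.

(* lexicographic comparison: la <= mu iff la = mu or la_j < mu_j at the first
   index j where they differ ("reverse lexicographic order" of the paper) *)
Fixpoint revlex_le (la mu : seq nat) : bool :=
  match la, mu with
  | [::], _ => true
  | _ :: _, [::] => false
  | a :: la', b :: mu' => (a < b)%N || ((a == b) && revlex_le la' mu')
  end.

Definition psi (n : nat) (R : comNzRingType) (mu : seq nat) : {mpoly R[n]} :=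
  \sum_(la <- partitions (sumn mu) | revlex_le la mu) plam n R la.

Arguments psum n R k : clear implicits.
Arguments hsym n R d : clear implicits.
Arguments esf n R d : clear implicits.
Arguments plam n R la : clear implicits.
Arguments psi n R mu : clear implicits.

(* Main.v *)
Require Import Defs.
From HB Require Import structures.
From mathcomp Require Import all_boot all_order all_algebra.
From mathcomp Require Import mpoly.
From mathcomp Require Import zify ring.
Import GRing.Theory.
Local Open Scope ring_scope.
Lemma parts_auxS f N K : parts_aux f.+1 N.+1 K =
  flatten [seq [seq a :: s | s <- parts_aux f (N.+1 - a) a] | a <- iota 1 (minn K N.+1)].
Proof. by []. Qed.

Lemma parts_aux1 f N : (N <= f)%N -> parts_aux f N 1 = [:: nseq N 1%N].
Proof.
elim: f N => [|f IH] [|N] //= hN.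
have -> : minn 1 N.+1 = 1%N by apply/minn_idPl.
by rewrite /= subSS subn0 IH.
Qed.

Lemma parts_aux0 f K : parts_aux f 0 K = [:: [::]].
Proof. by case: f. Qed.

Lemma revlex_refl s : revlex_le s s.
Proof. by elim: s => //= a s ->; rewrite eqxx orbT. Qed.
Lemma revlex_cons_eq a t u : revlex_le (a :: t) (a :: u) = revlex_le t u.
Proof. by rewrite /= ltnn eqxx. Qed.
Lemma revlex_cons_lt a b t u : (a < b)%N -> revlex_le (a :: t) (b :: u).
Proof. by move=> h; rewrite /= h. Qed.
Lemma revlex_cons_gt a b t u : (b < a)%N -> revlex_le (a :: t) (b :: u) = false.
Proof. by move=> h; rewrite /= ltnNge (ltnW h) /= gtn_eqF. Qed.

Section S.
Variables (n : nat) (R : comNzRingType).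
Local Notation p1 := (psum n R 1).
Local Notation p2 := (psum n R 2).
Local Notation pl := (plam n R).

Lemma sum_flat (L : nat -> seq (seq nat)) (xs : seq nat) (P : pred (seq nat)) (F : seq nat -> {mpoly R[n]}) :
  \sum_(s <- flatten [seq [seq a :: t | t <- L a] | a <- xs] | P s) F s =
  \sum_(a <- xs) \sum_(t <- L a | P (a :: t)) F (a :: t).
Proof.
elim: xs => [|a xs IH]; first by rewrite !big_nil.
by rewrite /= big_cat big_map IH big_cons.
Qed.

Lemma plam_cons a s : pl (a :: s) = psum n R a * pl s.
Proof. by rewrite /plam big_cons. Qed.
Lemma plam_nil : pl [::] = 1.
Proof. by rewrite /plam big_nil. Qed.
Lemma plam_ones N : pl (nseq N 1%N) = p1 ^+ N.
Proof. by elim: N => [|N IH]; rewrite ?plam_nil ?expr0 //= plam_cons IH exprS. Qed.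

Definition D j := \sum_(i < j.+1) p2 ^+ i * p1 ^+ ((j - i).*2).

Lemma D0 : D 0 = 1.
Proof. by rewrite /D big_ord1 /= expr0 mul1r subnn expr0. Qed.

Lemma DS j : D j.+1 = p1 ^+ (j.+1.*2) + p2 * D j.
Proof.
rewrite /D big_ord_recl /= expr0 mul1r subn0; congr (_ + _).
rewrite mulr_sumr; apply: eq_bigr => i _.
by rewrite /bump /= add1n subSS exprS mulrA.
Qed.

Lemma T f N : (N <= f)%N -> \sum_(s <- parts_aux f N 2) pl s = p1 ^+ (odd N) * D (N./2).
Proof.
elim: f N => [|f IH] [|[|N]] // hN; rewrite ?big_seq1 ?plam_nil ?D0 ?mulr1 //.
- rewrite parts_auxS (_ : minn 2 1 = 1%N) // sum_flat big_seq1 (_ : 1 - 1 = 0)%N //=.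
  by rewrite parts_aux0 big_seq1 plam_cons plam_nil mulr1 expr1.
rewrite parts_auxS (_ : minn 2 N.+2 = 2%N); last by apply/minn_idPl.
rewrite sum_flat /= big_cons big_seq1 subSS subn0 parts_aux1 ?big_seq1; last by lia.
rewrite (_ : N.+2 - 2 = N)%N; last by lia.
under eq_bigr do rewrite plam_cons.
rewrite -mulr_sumr IH; last by lia.
rewrite plam_cons plam_ones negbK DS.
rewrite mulrDr -exprD -exprS mulrCA; congr (p1 ^+ _ + _); rewrite doubleS; move: (odd_double_half N); lia.
Qed.
End S.
Section S2.
Variables (n : nat) (R : comNzRingType).
Local Notation p1 := (psum n R 1).
Local Notation p2 := (psum n R 2).
Local Notation pl := (plam n R).
Local Notation D := (D n R).

Lemma G r j f K : (minn 2 (j.*2 + r) <= K)%N -> (j.*2 + r <= f)%N ->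
  \sum_(s <- parts_aux f (j.*2 + r) K | revlex_le s (nseq j 2%N ++ nseq r 1%N)) pl s
  = p1 ^+ r * D j.
Proof.
elim: j f K => [|j IH] f K hK hf.
  rewrite double0 add0n in hK hf *; rewrite D0 mulr1.
  case: r hK hf => [|r] hK hf.
    by rewrite parts_aux0 big_cons big_nil /= addr0 plam_nil.
  case: f hf => [|f] hf; first by [].
  rewrite parts_auxS.
  have : (0 < minn K r.+1)%N by lia.
  case: (minn K r.+1) => [|c] // _.
  rewrite (_ : iota 1 c.+1 = 1%N :: iota 2 c) // sum_flat big_cons subSS subn0 parts_aux1; last by lia.
  rewrite big_cons big_nil (revlex_cons_eq 1 (nseq r 1) (nseq r 1)) revlex_refl addr0 plam_cons plam_ones -exprS.
  rewrite big_seq big1 ?addr0 // => a; rewrite mem_iota => /andP[ha _].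
  by rewrite big_pred0 // => t; rewrite revlex_cons_gt.
rewrite doubleS !addSn in hK hf *.
case: f hf => [|f] hf; first by [].
rewrite parts_auxS.
have : (1 < minn K (j.*2 + r).+2)%N by lia.
case: (minn K (j.*2 + r).+2) => [|[|c]] // _.
rewrite (_ : iota 1 c.+2 = 1%N :: 2%N :: iota 3 c) // sum_flat big_cons big_cons.
change (nseq j.+1 2%N ++ nseq r 1%N) with (2%N :: (nseq j 2%N ++ nseq r 1%N)).
rewrite (_ : (j.*2 + r).+2 - 1 = (j.*2 + r).+1)%N; last by lia.
rewrite (_ : (j.*2 + r).+2 - 2 = (j.*2 + r))%N; last by lia.
rewrite parts_aux1; last by lia.
rewrite big_cons big_nil revlex_cons_lt // addr0.
rewrite (eq_bigl (fun t => revlex_le t (nseq j 2%N ++ nseq r 1%N))); last by move=> t; rewrite revlex_cons_eq.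
rewrite (eq_bigr (fun t => p2 * pl t)); last by move=> t _; rewrite plam_cons.
rewrite -mulr_sumr IH; last by lia.
  rewrite big_seq big1 ?addr0; last first.
    move=> a; rewrite mem_iota => /andP[ha _].
    by rewrite big_pred0 // => t; rewrite revlex_cons_gt.
  rewrite plam_cons plam_ones DS -exprS mulrDr mulrCA -exprD; congr (p1 ^+ _ + _).
  rewrite doubleS; lia.
by rewrite geq_minl.
Qed.
End S2.
Lemma two_le_sum n (F : 'I_n -> nat) i j : i != j -> (F i + F j <= \sum_k F k)%N.
Proof.
move=> hij; rewrite (bigD1 i) //= (bigD1 j) /=; last by rewrite eq_sym.
by rewrite addnA leq_addr.
Qed.

Lemma one_le_sum n (F : 'I_n -> nat) i : (F i <= \sum_k F k)%N.
Proof. by rewrite (bigD1 i) //= leq_addr. Qed.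

Lemma count_id {n} {m : 'X_{1..n}} : mdeg m = 3%N ->
  ((mdeg m == 3%N) * 2 + mechar 3 m =
   \sum_(i < n) ((0 < m i)%N && (mdeg m == 3%N)) + \sum_(i < n) (U_(i) *+ 3 == m)%MM)%N.
Proof.
move=> hd; rewrite /mechar hd eqxx /=.
rewrite (eq_bigr (fun i => (0 < m i)%N : nat)); last by move=> i _; rewrite andbT.
have hle : forall i, (m i <= 3)%N by move=> i; rewrite -hd mdegE one_le_sum.
have hU : forall i, (U_(i) *+ 3 == m)%MM = (2 < m i)%N.
  move=> i; apply/eqP/idP => [<-|h]; first by rewrite mulmnE mnm1E eqxx.
  apply/mnmP => j; rewrite mulmnE mnm1E.
  case: (eqVneq i j) => [<-|hij] /=; first by have := hle i; lia.
  have := two_le_sum _ (fun k : 'I_n => m k) _ _ hij; rewrite -mdegE hd /=; lia.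
rewrite [X in (_ = _ + X)%N](eq_bigr (fun i => nat_of_bool (2 < m i))%N); last first.
  move=> i _; apply: congr1; apply/idP/idP.
    by rewrite -hU. 
  by rewrite -hU.
set s := (\sum_(i < n) (0 < m i)%N : nat).
set t := (\sum_(i < n) (1 < m i)%N : nat).
set u := (\sum_(i < n) (2 < m i)%N : nat).
have hstu : (s + t + u = 3)%N.
  rewrite -hd mdegE /s /t /u -!big_split /=; apply: eq_bigr => i _.
  by have := hle i; case: (m i) => [|[|[|[|x]]]].
have hts : (t <= s)%N by apply: leq_sum => i _; case: (m i) => [|[|x]].
have hut : (u <= t)%N by apply: leq_sum => i _; case: (m i) => [|[|[|x]]].
case: forallP => [hall|hn].
  have ht : t = 0%N.
    by rewrite /t big1 // => i _; have := hall i; case: (m i) => [|[|x]].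
  lia.
have : (1 <= t)%N.
  apply: contra_notT hn; rewrite -ltnNge ltnS leqn0 /t sum_nat_eq0 => /forallP h i.
  by have := h i; case: (m i) => [|[|x]].
lia.
Qed.

Section S3.
Variables (n : nat) (R : comNzRingType).

Lemma mcoeff_hsym d m : (hsym n R d)@_m = (mdeg m == d)%:R.
Proof.
rewrite /hsym raddf_sum /=.
rewrite (eq_bigr (fun b : 'X_{1..n < d.+1} => ((val b == m) : nat)%:R)); last first.
  by move=> b _; rewrite mcoeffX.
case: (eqVneq (mdeg m) d) => hd.
  have hb : (mdeg m < d.+1)%N by rewrite hd.
  rewrite (bigD1 (BMultinom hb)) /=; last by rewrite hd.
  rewrite eqxx big1 ?addr0 // => b /andP[_ hb']; case: eqP => // hbm.
  by case/eqP: hb'; apply: val_inj.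
rewrite big1 // => b /eqP hb; case: eqP => // hbm.
by move: hd; rewrite -hbm hb eqxx.
Qed.

Lemma mcoeff_MX (p : {mpoly R[n]}) i m :
  (p * 'X_i)@_m = if (0 < m i)%N then p@_(m - U_(i)) else 0.
Proof.
case: ifP => h.
  have hle : (U_(i) <= m)%MM.
    by apply/mnm_lepP => j; rewrite mnm1E; case: eqP => [<-|].
  by rewrite -{1}(submK hle) addmC mcoeffMX.
rewrite mcoeffM big1 // => k /eqP hm; rewrite mcoeffX.
case: eqP => [hk|]; last by rewrite mulr0.
have := congr1 (fun x : 'X_{1..n} => x i) hm.
by rewrite /= mnmDE -hk mnm1E eqxx addn1 => hmi; rewrite hmi in h.
Qed.

Lemma hid : hsym n R 3 *+ 2 + esf n R 3 = hsym n R 2 * psum n R 1 + psum n R 3.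
Proof.
apply/mpolyP => m.
rewrite mcoeffD mcoeffMn mcoeff_hsym /esf mcoeff_mesym.
rewrite /psum mulr_sumr mcoeffD !raddf_sum /=.
rewrite (eq_bigr (fun i : 'I_n => (((0 < m i)%N && (mdeg m == 3%N)) : nat)%:R)); last first.
  move=> i _; rewrite expr1 mcoeff_MX; case: ifP => h //=.
  rewrite mcoeff_hsym.
  have hle : (U_(i) <= m)%MM.
    by apply/mnm_lepP => j; rewrite mnm1E; case: eqP => [<-|].
  by rewrite -{2}(submK hle) mdegD mdeg1 addn1 eqSS.
rewrite [X in _ = _ + X](eq_bigr (fun i : 'I_n => ((U_(i) *+ 3 == m)%MM : nat)%:R)); last first.
  by move=> i _; rewrite mcoeffXn.
rewrite -!natr_sum -mulrnA -natrD -natrD; congr (_%:R).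
case: (eqVneq (mdeg m) 3%N) => hd; first by move: (count_id hd); rewrite hd eqxx.
rewrite /mechar (negbTE hd) /= big1 ?big1 //.
  move=> i _; case: eqP => // hm; by move: hd; rewrite -hm mdegMn mdeg1.
by move=> i _; rewrite andbF.
Qed.
End S3.
Lemma psi2 n (R : comNzRingType) j : psi n R (nseq j 2%N) = D n R j.
Proof.
rewrite /psi /partitions sumn_nseq (_ : (2 * j)%N = j.*2 + 0)%N; last by lia.
have := G n R 0 j (j.*2 + 0) (j.*2 + 0); rewrite cats0 expr0 mul1r => <- //.
by rewrite geq_minr.
Qed.

Lemma psi_main n (R : comNzRingType) k r : (1 <= k)%N ->
  psi n R ([:: 3%N] ++ nseq k 2%N ++ nseq r 1%N) =
  psum n R 1 * psum n R 1 ^+ (k.*2 + r).+2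
  + psum n R 2 * (psum n R 1 ^+ odd (k.*2 + r).+1 * D n R ((k.*2 + r).+1./2))
  + psum n R 3 * (psum n R 1 ^+ r * D n R k).
Proof.
move=> hk; set M := (k.*2 + r)%N.
rewrite /psi /partitions.
have -> : sumn ([:: 3%N] ++ nseq k 2%N ++ nseq r 1%N) = M.+3.
  by rewrite /= sumn_cat !sumn_nseq /M; lia.
rewrite parts_auxS minnn.
rewrite (_ : iota 1 M.+3 = [:: 1%N, 2%N, 3%N & iota 4 M]) //.
rewrite sum_flat !big_cons.
change ([:: 3%N] ++ nseq k 2%N ++ nseq r 1%N) with (3%N :: (nseq k 2%N ++ nseq r 1%N)).
rewrite [X in X + _](eq_bigl (fun _ => true)); last by move=> t; rewrite revlex_cons_lt.
rewrite [X in _ + (X + _)](eq_bigl (fun _ => true)); last by move=> t; rewrite revlex_cons_lt.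
rewrite (_ : M.+3 - 1 = M.+2)%N; last by lia.
rewrite (_ : M.+3 - 2 = M.+1)%N; last by lia.
rewrite (_ : M.+3 - 3 = M)%N; last by lia.
rewrite parts_aux1 // big_cons big_nil addr0 plam_cons plam_ones.
rewrite [X in _ + (_ + (X + _))](eq_bigl (fun t => revlex_le t (nseq k 2%N ++ nseq r 1%N))); last by move=> t; rewrite revlex_cons_eq.
rewrite [X in _ + (_ + (X + _))](eq_bigr (fun t => psum n R 3 * plam n R t)); last by move=> t _; rewrite plam_cons.
rewrite -mulr_sumr G; last 2 first.
- lia.
- by rewrite /M; lia.
have Z : forall mu', \sum_(j <- iota 4 M) \sum_(t <- parts_aux M.+2 (M.+3 - j) j | revlex_le (j :: t) (3%N :: mu')) plam n R (j :: t) = 0.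
  move=> mu'; rewrite big_seq big1 // => a; rewrite mem_iota => /andP[ha _].
  by rewrite big_pred0 // => t; rewrite revlex_cons_gt.
rewrite Z addr0.
rewrite [X in _ + (X + _)](eq_bigr (fun t => psum n R 2 * plam n R t)); last by move=> t _; rewrite plam_cons.
by rewrite -mulr_sumr T // addrA.
Qed.
Theorem proposition3p4 (R : comNzRingType) (n k r : nat) :
  (1 <= k)%N -> (1 <= r)%N ->
  let m := (r.+1)./2 in
  let P1 := psum n R 1 in
  let h2 := hsym n R 2 in
  let g := P1 ^+ r * (hsym n R 3 *+ 2 + esf n R 3) * psi n R (nseq k 2%N) in
  psi n R ([:: 3%N] ++ nseq k 2%N ++ nseq r 1%N) =
  (if odd r then
     (psi n R (nseq (m + k + 1) 2%N) - h2 * P1 ^+ r.+1 * psi n R (nseq k 2%N)) + g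
   else
     P1 * (psi n R (nseq (m + k + 1) 2%N) - h2 * P1 ^+ r * psi n R (nseq k 2%N)) + g).
Proof.
move=> hk hr m P1 h2 g.
rewrite /g /h2 /P1 /m psi_main // !psi2 hid.
clear g h2 P1 m.
have er := odd_double_half r.
have em : (r.+1)./2 = (odd r + r./2)%N by rewrite /= uphalf_half.
rewrite em; set h := r./2.
set M := (k.*2 + r)%N.
case: (boolP (odd r)) => ho.
  have e1 : M.+1 = (k + h + 1).*2 by rewrite /M -er ho; lia.
  rewrite e1 odd_double doubleK (_ : (true + h + k + 1 = (k + h + 1).+1)%N); last by lia.
  rewrite DS (_ : (k + h + 1).+1.*2 = ((k + h + 1).*2).+2)%N; last by rewrite doubleS.
  rewrite (_ : psum n R 1 ^+ false = 1) // !exprS.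
  ring.
have e1 : M.+1 = (k + h).*2.+1 by rewrite /M -er (negbTE ho); lia.
rewrite e1 (_ : odd (k + h).*2.+1 = true); last by rewrite /= odd_double.
rewrite (_ : (k + h).*2.+1./2 = (k + h))%N; last by rewrite /= uphalf_double.
rewrite (_ : (false + h + k + 1 = (k + h).+1)%N); last by lia.
rewrite DS (_ : (k + h).+1.*2 = ((k + h).*2.+1).+1)%N; last by rewrite doubleS.
rewrite expr1 !exprS.
ring.
Qed.
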